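(* Let $G$ be a primitive strongly regular graph with parameters $(v,k,\lambda,\mu)$. Then $|\lambda-\mu|<v^{3/4}$.
   Context: A graph is strongly regular with parameters $(v,k,\lambda,\mu)$ if it is a $k$-regular graph on $v$ vertices such that each edge lies in exactly $\lambda$ triangles and any two distinct non-adjacent vertices have exactly $\mu$ common neighbours; complete and edgeless graphs are excluded. A strongly regular graph is primitive if both it and its complement are connected. *)

(* Defs.v *)
From mathcomp Require Import all_boot all_order all_algebra.
From mathcomp Require Import all_classical all_reals all_analysis.
Set Implicit Arguments. Unset Strict Implicit. Unset Printing Implicit Defensive.

Definition simple_graph (T : finType) (e : rel T) : Prop :=
  symmetric e /\ irreflexive e.

Definition common_nbrs (T : finType) (e : rel T) (x y : T) : nat :=
  #|[set z | e x z && e y z]|.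

(* Strongly regular graph with parameters (v,k,lambda,mu); complete and
   edgeless graphs are excluded. *)
Definition srg (T : finType) (e : rel T) (v k lam mu : nat) : Prop :=
  [/\ simple_graph e, #|T| = v, (forall x : T, #|[set y | e x y]| = k) &
      [/\ 
      (forall x y : T, x != y -> e x y -> common_nbrs e x y = lam),
        (forall x y : T, x != y -> ~~ e x y -> common_nbrs e x y = mu),
        (exists x y : T, e x y) &
        (exists x y : T, (x != y) && ~~ e x y)]].

Definition compl_rel (T : finType) (e : rel T) : rel T :=
  fun x y => (x != y) && ~~ e x y.

Definition connected_graph (T : finType) (e : rel T) : Prop :=
  forall x y : T, connect e x y.

Definition primitive_srg (T : finType) (e : rel T) (v k lam mu : nat) : Prop :=
  [/\ srg e v k lam mu, connected_graph e & connected_graph (compl_rel e)].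

(* Main.v *)
Require Import Defs.
From mathcomp Require Import all_boot all_order all_algebra.
From mathcomp Require Import all_classical all_reals all_analysis.
From mathcomp Require Import ring lra.
Set Implicit Arguments. Unset Strict Implicit. Unset Printing Implicit Defensive.
Import Order.TTheory GRing.Theory Num.Theory.
Local Open Scope ring_scope.



Lemma rank_factor (F : fieldType) n (E : 'M[F]_n) :
  E = (E *m pinvmx (row_base E)) *m row_base E.
Proof. by rewrite mulmxKpV // eq_row_base. Qed.

Lemma unit_cube (F : fieldType) m (K : 'M[F]_m) :
  K \in unitmx -> K *m K *m K = K *m K -> K = 1%:M.
Proof.
move=> Ku KK.
have := congr1 (mulmx (invmx K)) KK.
rewrite -!mulmxA !(mulKmx Ku).
move/(congr1 (mulmx (invmx K))); rewrite !(mulKmx Ku) => ->.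
by rewrite mulVmx.
Qed.

Lemma rank_idem (F : fieldType) n (E : 'M[F]_n) :
  E *m E = E -> (\rank E)%:R = \tr E.
Proof.
move=> EE.
set B := row_base E; set C := E *m pinvmx B.
have CB : C *m B = E by rewrite /C /B -rank_factor.
set K := B *m C.
have KK : K *m K *m K = K *m K.
  have -> : K *m K *m K = B *m (C *m B) *m (C *m B) *m C by rewrite !mulmxA.
  have -> : K *m K = B *m (C *m B) *m C by rewrite !mulmxA.
  by rewrite CB -(mulmxA B E E) EE.
have Ku : K \in unitmx.
  rewrite -row_full_unit /row_full eqn_leq rank_leq_col /=.
  have EK : C *m K *m B = E.
    have -> : C *m K *m B = (C *m B) *m (C *m B) by rewrite /K !mulmxA.
    by rewrite CB EE.
  apply: (@leq_trans (\rank (C *m K *m B))); first by rewrite EK.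
  by apply: leq_trans (mxrankM_maxl _ _) _; apply: mxrankM_maxr.
have K1 : K = 1%:M by apply: unit_cube.
have -> : \tr E = \tr (C *m B) by rewrite CB.
by rewrite mxtrace_mulC -/K K1 mxtrace1.
Qed.


Lemma rank_hsq_f (F : fieldType) n r (C : 'M[F]_(n, r)) (B : 'M[F]_(r, n)) :
  (\rank (\matrix_(i, j) ((C *m B) i j ^+ 2)) <= r * r)%N.
Proof.
pose P : 'M[F]_(n, #|{: 'I_r * 'I_r}|) :=
  \matrix_(i, t) (C i (enum_val t).1 * C i (enum_val t).2).
pose Q : 'M[F]_(#|{: 'I_r * 'I_r}|, n) :=
  \matrix_(t, j) (B (enum_val t).1 j * B (enum_val t).2 j).
have -> : \matrix_(i, j) ((C *m B) i j ^+ 2) = P *m Q.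
  apply/matrixP => i j; rewrite !mxE.
  rewrite expr2 mulr_suml.
  under eq_bigr do rewrite mulr_sumr.
  rewrite pair_big /=.
  under [RHS]eq_bigr do rewrite !mxE.
  rewrite (reindex (fun t : 'I_#|{: 'I_r * 'I_r}| => enum_val t)) /=; last exact: onW_bij _ (enum_val_bij _).
  apply: eq_bigr => t _; ring.
apply: leq_trans (mxrankM_maxl _ _) _.
by apply: leq_trans (rank_leq_col _) _; rewrite card_prod card_ord.
Qed.

Lemma rank_hsq (F : fieldType) n (E : 'M[F]_n) :
  (\rank (\matrix_(i, j) (E i j ^+ 2)) <= (\rank E) * (\rank E))%N.
Proof.
have CB := rank_factor E.
have := rank_hsq_f (E *m pinvmx (row_base E)) (row_base E).
by rewrite -CB.
Qed.

Lemma two_dist (F : fieldType) n (E : 'M[F]_n) (a b : F) :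
  (forall i j, i != j -> (E i j - a) * (E i j - b) = 0) ->
  (forall i, (E i i - a) * (E i i - b) != 0) ->
  (n <= (\rank E).+1 ^ 2)%N.
Proof.
move=> Hoff Hdiag.
pose N := \matrix_(i, j) ((E i j - a) * (E i j - b)).
have rN : \rank N = n.
  apply: mxrank_unit.
  have -> : N = diag_mx (\row_i ((E i i - a) * (E i i - b))).
    apply/matrixP => i j; rewrite !mxE.
    case: eqVneq => [->|ij]; first by rewrite mulr1n.
    by rewrite mulr0n Hoff.
  rewrite unitmxE det_diag unitfE prodf_seq_neq0.
  by apply/allP => i _ /=; rewrite mxE.
apply: (@leq_trans (\rank N)); first by rewrite rN.
have -> : N = \matrix_(i, j) (E i j ^+ 2) + (- (a + b)) *: E
               + (a * b) *: (const_mx 1%R : 'M[F]_(n, 1)) *m (const_mx 1%R : 'M[F]_(1, n)).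
  apply/matrixP => i j; rewrite !mxE big_ord1 !mxE; ring.
have h1 := rank_hsq E.
have h2 : (\rank ((- (a + b)) *: E) <= \rank E)%N by apply/mxrankS/scalemx_sub.
have h3 : (\rank ((a * b) *: (const_mx 1%R : 'M[F]_(n, 1)) *m (const_mx 1%R : 'M[F]_(1, n))) <= 1)%N.
  by apply: leq_trans (mxrankM_maxl _ _) _; apply: leq_trans (rank_leq_col _) _.
apply: leq_trans (mxrank_add _ _) _.
apply: leq_trans (leq_add (mxrank_add _ _) h3) _.
apply: leq_trans (leq_add (leq_add h1 h2) (leqnn 1)) _.
rewrite -addn1 expnS expn1 -[(\rank E).+1]addn1 mulnDl mulnDr !muln1 mul1n.
by rewrite -!addnA leq_add2l leq_add2l leq_addl.
Qed.
Definition Jm (R : fieldType) n : 'M[R]_n := const_mx 1.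
Definition Xm (R : fieldType) n (A : 'M[R]_n) (p q r : R) : 'M[R]_n :=
  p *: 1%:M + q *: A + r *: Jm R n.

Lemma JJ (R : fieldType) n : Jm R n *m Jm R n = n%:R *: Jm R n.
Proof.
apply/matrixP => i j; rewrite !mxE.
under eq_bigr do rewrite !mxE mulr1.
by rewrite sumr_const card_ord mulr1.
Qed.

Lemma Xm_mul (R : fieldType) n (A : 'M[R]_n) (k l m : R) p1 q1 r1 p2 q2 r2 :
  A *m A = (k - m) *: 1%:M + (l - m) *: A + m *: Jm R n ->
  A *m Jm R n = k *: Jm R n -> Jm R n *m A = k *: Jm R n ->
  Xm A p1 q1 r1 *m Xm A p2 q2 r2 =
  Xm A (p1 * p2 + q1 * q2 * (k - m))
       (p1 * q2 + q1 * p2 + q1 * q2 * (l - m))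
       (p1 * r2 + r1 * p2 + q1 * q2 * m + q1 * r2 * k + r1 * q2 * k
         + r1 * r2 * n%:R).
Proof.
move=> HA2 HAJ HJA.
rewrite /Xm !mulmxDl !mulmxDr.
rewrite -!scalemxAl -!scalemxAr !mul1mx !mulmx1 HA2 HAJ HJA JJ.
apply/matrixP => i j; rewrite !mxE; ring.
Qed.

Definition Em (R : fieldType) n (A : 'M[R]_n) (k th th' : R) : 'M[R]_n :=
  Xm A (- th' * (th - th')^-1) (th - th')^-1
     (- ((k - th') / n%:R) * (th - th')^-1).

Lemma Em_idem (R : fieldType) n (A : 'M[R]_n) (k l m th th' : R) :
  A *m A = (k - m) *: 1%:M + (l - m) *: A + m *: Jm R n ->
  A *m Jm R n = k *: Jm R n -> Jm R n *m A = k *: Jm R n ->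
  n%:R != 0 :> R -> th != th' -> th + th' = l - m -> th * th' = m - k ->
  n%:R * m = k ^+ 2 - (l - m) * k - k + m ->
  Em A k th th' *m Em A k th th' = Em A k th th'.
Proof.
move=> HA2 HAJ HJA n0 thth' Hs Hp Hc.
rewrite /Em (Xm_mul _ _ _ _ _ _ HA2 HAJ HJA).
set t := (th - th')^-1; set c := (k - th') / n%:R.
have H1 : c * n%:R - (k - th') = 0 by rewrite /c mulfVK // subrr.
have H3 : t * (th - th') - 1 = 0 by rewrite /t mulVf ?subrr // subr_eq0.
have H4 : k - m + th * th' = 0 by rewrite Hp; ring.
have H5 : (l - m) - th - th' = 0 by rewrite -Hs; ring.
have H2 : m - c * (k - th) = 0.
  have : n%:R * (c * (k - th)) = n%:R * m.
    transitivity ((k - th') * (k - th)); first by rewrite /c; field.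
    rewrite Hc; transitivity (k ^+ 2 - (th + th') * k + th * th'); first by ring.
    by rewrite Hs Hp; ring.
  by move/(mulfI n0) => ->; rewrite subrr.
congr Xm.
- apply/eqP; rewrite -subr_eq0; apply/eqP.
  transitivity (t ^+ 2 * (k - m + th * th') - th' * t * (t * (th - th') - 1)).
    by ring.
  by rewrite H4 H3; ring.
- apply/eqP; rewrite -subr_eq0; apply/eqP.
  transitivity (t ^+ 2 * ((l - m) - th - th') + t * (t * (th - th') - 1)).
    by ring.
  by rewrite H5 H3; ring.
- apply/eqP; rewrite -subr_eq0; apply/eqP.
  transitivity (c * t ^+ 2 * (c * n%:R - (k - th')) + t ^+ 2 * (m - c * (k - th))
                - c * t * (t * (th - th') - 1)).
    by ring.
  by rewrite H1 H2 H3; ring.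
Qed.

Lemma Em_tr (R : fieldType) n (A : 'M[R]_n) (k th th' : R) :
  \tr A = 0 -> n%:R != 0 :> R -> th != th' ->
  \tr (Em A k th th') = - (th' * n%:R + k - th') / (th - th').
Proof.
move=> trA n0 d0.
rewrite /Em /Xm !mxtraceD !mxtraceZ trA mxtrace1.
have -> : \tr (Jm R n) = n%:R.
  rewrite /mxtrace; under eq_bigr do rewrite mxE.
  by rewrite sumr_const card_ord.
have d0' : th - th' != 0 by rewrite subr_eq0.
field; by rewrite n0 d0'.
Qed.

Lemma Em_rank (R : fieldType) n (A : 'M[R]_n) (k th th' : R) :
  (forall i, A i i = 0) -> (forall i j, i != j -> A i j = 0 \/ A i j = 1) ->
  th != th' -> th' != 0 -> th' != -1 ->
  (n <= (\rank (Em A k th th')).+1 ^ 2)%N.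
Proof.
move=> Hd Ho d0 t0 t1.
have d0' : th - th' != 0 by rewrite subr_eq0.
set p := - th' * (th - th')^-1; set q := (th - th')^-1;
  set r := - ((k - th') / n%:R) * (th - th').
have Ee : forall i j, Em A k th th' i j =
    p * (i == j)%:R + q * A i j + (- ((k - th') / n%:R) * (th - th')^-1).
  by move=> i j; rewrite /Em /Xm !mxE mulr1.
apply: (two_dist (a := q + (- ((k - th') / n%:R) * (th - th')^-1))
                 (b := - ((k - th') / n%:R) * (th - th')^-1)).
- move=> i j ij; rewrite Ee (negbTE ij) mulr0 add0r.
  by case: (Ho i j ij) => ->; ring.
- move=> i; rewrite Ee Hd eqxx mulr1 mulr0 addr0.
  have -> : (p + (- ((k - th') / n%:R) * (th - th')^-1) -
             (q + - ((k - th') / n%:R) * (th - th')^-1)) *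
            (p + - ((k - th') / n%:R) * (th - th')^-1 -
             - ((k - th') / n%:R) * (th - th')^-1) = (p - q) * p by ring.
  rewrite mulf_neq0 // /p /q.
    have -> : - th' * (th - th')^-1 - (th - th')^-1 = (- (th' + 1)) * (th - th')^-1 by ring.
    by rewrite mulf_neq0 ?invr_eq0 // oppr_eq0 addr_eq0.
  by rewrite mulf_neq0 ?invr_eq0 // oppr_eq0.
Qed.


Lemma sum_enum (T : finType) (R : nmodType) (G : T -> R) :
  \sum_(l < #|T|) G (enum_val l) = \sum_(z : T) G z.
Proof.
by rewrite [RHS](reindex (fun t : 'I_#|T| => enum_val t)) //=; exact: onW_bij _ (enum_val_bij _).
Qed.

Lemma sum_card (T : finType) (R : pzSemiRingType) (P : pred T) :
  \sum_(z : T) ((P z)%:R : R) = #|P|%:R.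
Proof.
rewrite -natr_sum; congr (_%:R); rewrite -sum1_card [RHS]big_mkcond /=.
by apply: eq_bigr => z _; rewrite unfold_in; case: (P z).
Qed.

Definition adjm (R : pzSemiRingType) (T : finType) (e : rel T) : 'M[R]_#|T| :=
  \matrix_(i, j) (e (enum_val i) (enum_val j))%:R.

Lemma card_setP (T : finType) (P : pred T) : #|[set z | P z]| = #|P|.
Proof. by apply: eq_card => z; rewrite inE. Qed.

Lemma adjm_mulE (R : fieldType) (T : finType) (e : rel T) x y :
  symmetric e ->
  (adjm R e *m adjm R e) x y =
  #|[set z | e (enum_val x) z && e (enum_val y) z]|%:R.
Proof.
move=> sym; rewrite mxE.
under eq_bigr do rewrite !mxE.
rewrite (sum_enum (fun z => (e (enum_val x) z)%:R * (e z (enum_val y))%:R)).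
rewrite card_setP -sum_card; apply: eq_bigr => z _.
by rewrite -natrM mulnb (sym z).
Qed.

Lemma adjm_J (R : fieldType) (T : finType) (e : rel T) k :
  symmetric e -> (forall x : T, #|[set y | e x y]| = k) ->
  adjm R e *m Jm R #|T| = k%:R *: Jm R #|T| /\
  Jm R #|T| *m adjm R e = k%:R *: Jm R #|T|.
Proof.
move=> sym Hk; split; apply/matrixP => i j; rewrite !mxE.
  under eq_bigr do rewrite !mxE mulr1.
  rewrite (sum_enum (fun z => (e (enum_val i) z)%:R)) sum_card -card_setP.
  by rewrite Hk mulr1.
under eq_bigr do rewrite !mxE mul1r.
rewrite (sum_enum (fun z => (e z (enum_val j))%:R)).
under eq_bigr do rewrite sym.
by rewrite sum_card -card_setP Hk mulr1.
Qed.

Lemma adjm_tr (R : fieldType) (T : finType) (e : rel T) :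
  irreflexive e -> \tr (adjm R e) = 0.
Proof.
move=> irr; rewrite /mxtrace; apply: big1 => i _; by rewrite mxE irr.
Qed.

Lemma adjm_diag (R : fieldType) (T : finType) (e : rel T) :
  irreflexive e -> forall i, adjm R e i i = 0.
Proof. by move=> irr i; rewrite mxE irr. Qed.

Lemma adjm_off (R : fieldType) (T : finType) (e : rel T) :
  forall i j, i != j -> adjm R e i j = 0 \/ adjm R e i j = 1.
Proof. by move=> i j _; rewrite mxE; case: (e _ _); [right|left]. Qed.

Lemma adjm_sq (R : fieldType) (T : finType) (e : rel T) (v k lam mu : nat) :
  srg e v k lam mu ->
  adjm R e *m adjm R e = (k%:R - mu%:R) *: 1%:M + (lam%:R - mu%:R) *: adjm R e
                          + mu%:R *: Jm R #|T|.
Proof.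
move=> [[sym irr] Hv Hk [Hl Hm _ _]].
apply/matrixP => i j; rewrite adjm_mulE // !mxE.
case: eqVneq => [<-|ij].
  rewrite irr mulr1 mulr0 addr0 mulr1.
  have -> : [set z | e (enum_val i) z && e (enum_val i) z] = [set z | e (enum_val i) z].
    by apply/setP => z; rewrite !inE andbb.
  by rewrite Hk; ring.
have xy : enum_val i != enum_val j.
  by apply: contra ij => /eqP /enum_val_inj ->.
rewrite mulr0 add0r mulr1.
case E: (e (enum_val i) (enum_val j)).
  by rewrite -(Hl _ _ xy E) /common_nbrs mulr1; ring.
by rewrite -(Hm _ _ xy (negbT E)) /common_nbrs mulr0; ring.
Qed.

Lemma prim_facts (T : finType) (e : rel T) (v k lam mu : nat) :
  primitive_srg e v k lam mu ->
  [/\ (mu < k)%N, lam.+1 != k & (2 <= #|T|)%N].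
Proof.
move=> [[[sym irr] Hv Hk [Hl Hm [x0 [y0 e0]] [x1 [y1 /andP[n1 ne1]]]]] Hc Hcc].
have mule : (mu <= k)%N.
  rewrite -(Hm _ _ n1 ne1) -(Hk x1) /common_nbrs.
  by apply: subset_leq_card; apply/fintype.subsetP => z; rewrite !inE => /andP[].
split.
- rewrite ltn_neqAle mule andbT; apply/eqP => muk.
  have nb : forall x y, compl_rel e x y -> forall z, e x z -> e y z.
    move=> x y /andP[xy nxy] z exz.
    have : [set z | e x z && e y z] = [set z | e x z].
      apply/eqP; rewrite eqEcard; apply/andP; split.
        by apply/fintype.subsetP => w; rewrite !inE => /andP[].
      by have := Hm _ _ xy nxy; rewrite /common_nbrs => ->; rewrite Hk muk.
    by move/setP/(_ z); rewrite !inE exz => /andP[].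
  have cl : forall z, fingraph.closed (compl_rel e) (fun w => e w z).
    move=> z x y cxy; apply/idP/idP; first exact: nb.
    apply: nb; move: cxy; rewrite /compl_rel eq_sym => /andP[-> /=].
    by rewrite sym.
  have := closed_connect (cl y0) (Hcc x0 y0).
  by rewrite !unfold_in /= e0 irr.
- apply/eqP => lk.
  have nb : forall x y, e x y -> forall z, z != y -> e x z -> e y z.
    move=> x y exy z zy exz.
    have xy : x != y by apply: contraTneq exy => ->; rewrite irr.
    have : [set z | e x z && e y z] = [set z | e x z] :\ y.
      apply/eqP; rewrite eqEcard; apply/andP; split.
        apply/fintype.subsetP => w; rewrite !inE => /andP[-> eyw]; rewrite andbT.
        by apply: contraTneq eyw => ->; rewrite irr.
      have := Hl _ _ xy exy; rewrite /common_nbrs => ->.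
      have := cardsD1 y [set z | e x z]; rewrite Hk inE exy -lk /= add1n.
      by case => ->.
    by move/setP/(_ z); rewrite !inE zy exz /= => ->.
  have cl : forall z, fingraph.closed e (fun w => (w == z) || e w z).
    move=> z x y exy.
    have eyx : e y x by rewrite sym.
    rewrite !unfold_in /=.
    apply/idP/idP => /orP [|].
    + move=> /eqP <-; by rewrite eyx orbT.
    + case: (eqVneq z y) => [-> _|zy exz]; first by rewrite ?eqxx ?orbT.
      by rewrite (nb x y exy z zy exz) orbT.
    + move=> /eqP <-; by rewrite exy orbT.
    + case: (eqVneq z x) => [-> _|zx eyz]; first by rewrite ?eqxx ?orbT.
      by rewrite (nb y x eyx z zx eyz) orbT.
  have := closed_connect (cl y1) (Hc x1 y1); rewrite !unfold_in /=.
  by rewrite eqxx /= (negbTE n1) (negbTE ne1).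
- rewrite (cardD1 x1) (cardD1 y1) !inE eq_sym n1 /=.
  by [].
Qed.


Lemma counting (R : fieldType) n (A : 'M[R]_n) (k l m : R) :
  A *m A = (k - m) *: 1%:M + (l - m) *: A + m *: Jm R n ->
  A *m Jm R n = k *: Jm R n -> (0 < n)%N ->
  n%:R * m = k ^+ 2 - (l - m) * k - k + m.
Proof.
move=> HA2 HAJ n0.
have := mulmxA A A (Jm R n).
rewrite HA2 HAJ -scalemxAr HAJ !mulmxDl -!scalemxAl mul1mx HAJ JJ !scalerA.
move/matrixP/(_ (Ordinal n0) (Ordinal n0)); rewrite !mxE !mulr1 => H.
by rewrite expr2 H; ring.
Qed.

Lemma final_ineq (R : realFieldType) (n k f x : R) :
  0 < n -> 1 <= f -> n <= (f + 1) ^+ 2 -> f * x ^+ 2 <= k * (n - k) ->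
  x ^+ 4 < n ^+ 3.
Proof.
move=> n0 f1 nf fx.
have h1 : 4 * (f * x ^+ 2) <= n ^+ 2.
  apply: (le_trans (y := 4 * (k * (n - k)))); first by lra.
  have : 0 <= (n - 2 * k) ^+ 2 by apply: sqr_ge0.
  by move=> h; nra.
have h2 : 16 * f ^+ 2 * x ^+ 4 <= n ^+ 4.
  have e : 16 * f ^+ 2 * x ^+ 4 = (4 * (f * x ^+ 2)) ^+ 2 by ring.
  rewrite e; have -> : n ^+ 4 = (n ^+ 2) ^+ 2 by ring.
  rewrite ler_pXn2r // ?nnegrE //.
  by apply: mulr_ge0; [lra | apply: mulr_ge0; [lra | apply: sqr_ge0]].
  by apply: sqr_ge0.
have h3 : n < 16 * f ^+ 2 by nra.
have x4 : 0 <= x ^+ 4.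
  have -> : x ^+ 4 = (x ^+ 2) ^+ 2 by ring.
  exact: sqr_ge0.
have : x ^+ 4 * n <= n ^+ 4.
  apply: le_trans h2; rewrite [16 * _ * _]mulrC; apply: ler_wpM2l => //; lra.
case: (eqVneq x 0) => [-> _|xn0]; first by rewrite expr0n /= exprn_gt0.
have x4' : 0 < x ^+ 4 by rewrite lt_def x4 expf_neq0.
have : x ^+ 4 * n < x ^+ 4 * (16 * f ^+ 2) by rewrite ltr_pM2l.
move=> hl; have h4 : x ^+ 4 * n < n ^+ 4 by apply: lt_le_trans hl _; rewrite mulrC; lra.
rewrite -(ltr_pM2r n0).
by have <- : n ^+ 4 = n ^+ 3 * n by ring.
Qed.


Theorem corollary1p4 (R : realType) (T : finType) (e : rel T)
    (v k lam mu : nat) :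
  primitive_srg e v k lam mu ->
  `|(lam%:R : R) - mu%:R| < (v%:R : R) `^ (3 / 4).
Proof.
move=> Hp.
have [mk lk n2] := prim_facts Hp.
case: Hp => Hs _ _.
have Hs' := Hs; case: Hs' => [[sym irr] Hv Hk _].
rewrite -Hv.
have HA2 := adjm_sq R Hs.
have [HAJ HJA] := adjm_J R sym Hk.
have trA := adjm_tr R irr.
set n := #|T| in n2 HA2 HAJ HJA trA *.
set A := adjm R e in HA2 HAJ HJA trA *.
have n0 : (0 < n)%N by apply: leq_trans n2.
have n0R : n%:R != 0 :> R by rewrite pnatr_eq0 -lt0n.
have Hc := counting HA2 HAJ n0.
set kR := (k%:R : R) in HA2 HAJ HJA Hc *.
set lR := (lam%:R : R) in HA2 HAJ HJA Hc *.
set mR := (mu%:R : R) in HA2 HAJ HJA Hc *.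
set d := lR - mR in HA2 Hc *.
have mkR : mR < kR by rewrite ltr_nat.
set D := d ^+ 2 + 4 * (kR - mR).
have D0 : 0 < D by rewrite /D; nra.
set sD := Num.sqrt D.
have sD0 : 0 < sD by rewrite sqrtr_gt0.
have sD2 : sD ^+ 2 = D by rewrite sqr_sqrtr // ltW.
set th := (d + sD) / 2; set th' := (d - sD) / 2.
have hs : th + th' = d by rewrite /th /th'; field.
have hp : th * th' = mR - kR.
  transitivity ((d ^+ 2 - sD ^+ 2) / 4); first by rewrite /th /th'; field.
  by rewrite sD2 /D; field.
have pr : (d - sD) * (d + sD) < 0.
  have -> : (d - sD) * (d + sD) = d ^+ 2 - sD ^+ 2 by ring.
  by rewrite sD2 /D; lra.
have dlt : d < sD.
  rewrite ltNge; apply/negP => h.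
  have : 0 <= (d - sD) * (d + sD) by apply: mulr_ge0; lra.
  lra.
have dgt : - sD < d.
  rewrite ltNge; apply/negP => h.
  have : 0 <= (d - sD) * (d + sD).
    have -> : (d - sD) * (d + sD) = (sD - d) * (- sD - d) by ring.
    by apply: mulr_ge0; lra.
  lra.
have th_pos : 0 < th by rewrite /th; lra.
have th'_neg : th' < 0 by rewrite /th'; lra.
have thne : th != th' by rewrite gt_eqF // (lt_trans th'_neg).
have thne' : th' != th by rewrite eq_sym.
have th'1 : th' != -1.
  apply/eqP => h.
  have : lR + 1 = kR.
    have e1 : th = d + 1 by rewrite -hs h; ring.
    by move: hp; rewrite e1 h /d; lra.
  move/eqP; rewrite /lR /kR natr1 eqr_nat => /eqP lk'.
  by move/eqP: lk; rewrite lk'.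
have Hd := adjm_diag R irr.
have Ho := @adjm_off R T e.
pose E1 := Em A kR th th'; pose E2 := Em A kR th' th.
have E1i : E1 *m E1 = E1 by apply: (Em_idem HA2 HAJ HJA n0R thne hs hp Hc).
have E2i : E2 *m E2 = E2.
  by apply: (Em_idem HA2 HAJ HJA n0R thne' _ _ Hc); rewrite ?(addrC th') ?(mulrC th').
have f1E := rank_idem E1i; have f2E := rank_idem E2i.
rewrite /E1 Em_tr // in f1E; rewrite /E2 Em_tr // in f2E.
have b1 : (n <= (\rank E1).+1 ^ 2)%N.
  by apply: Em_rank => //; rewrite lt_eqF.
have b2 : (n <= (\rank E2).+1 ^ 2)%N.
  apply: Em_rank => //; first by rewrite gt_eqF.
  by rewrite gt_eqF // (lt_trans _ th_pos) // oppr_lt0.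
set f1 := \rank E1 in b1 f1E; set f2 := \rank E2 in b2 f2E.
have key : f1%:R * th ^+ 2 + f2%:R * th' ^+ 2 = kR * (n%:R - kR).
  rewrite f1E f2E.
  have dd : th - th' != 0 by rewrite subr_eq0.
  have dd' : th' - th != 0 by rewrite subr_eq0.
  transitivity (- (th * th') * (n%:R - 1) - kR * (th + th')).
    by field; rewrite dd dd'.
  rewrite hs hp; move: Hc; rewrite /d; nra.
have f1p : (0 : R) <= f1%:R by [].
have f2p : (0 : R) <= f2%:R by [].
have fge1 : forall f, (n <= f.+1 ^ 2)%N -> (1 : R) <= f%:R.
  move=> f hf; rewrite ler1n lt0n; apply/eqP => f0.
  by move: hf; rewrite f0 => hf; have := leq_trans n2 hf.
have nR0 : (0 : R) < n%:R by rewrite ltr0n.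
have bnd : forall f, (n <= f.+1 ^ 2)%N -> n%:R <= (f%:R + 1 : R) ^+ 2.
  by move=> f hf; rewrite natr1 -natrX ler_nat.
have x1 : th ^+ 4 < n%:R ^+ 3.
  apply: (final_ineq (k := kR) nR0 (fge1 _ b1) (bnd _ b1)).
  have : 0 <= f2%:R * th' ^+ 2 by apply: mulr_ge0 => //; apply: sqr_ge0.
  by rewrite mulrC in key *; lra.
have x2 : th' ^+ 4 < n%:R ^+ 3.
  apply: (final_ineq (k := kR) nR0 (fge1 _ b2) (bnd _ b2)).
  have : 0 <= f1%:R * th ^+ 2 by apply: mulr_ge0 => //; apply: sqr_ge0.
  by lra.
have y4 : `|d| ^+ 4 < n%:R ^+ 3.
  have [d0|d0] := leP 0 d.
    rewrite ger0_norm //; apply: le_lt_trans x1.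
    by rewrite lerXn2r ?nnegrE //; lra.
  rewrite ltr0_norm //; apply: le_lt_trans x2.
  have -> : th' ^+ 4 = (- th') ^+ 4 by ring.
  by rewrite lerXn2r ?nnegrE //; lra.
rewrite ltNge; apply/negP => hge.
have : (n%:R `^ (3 / 4)) ^+ 4 <= `|d| ^+ 4.
  by rewrite lerXn2r ?nnegrE // powR_ge0.
rewrite -powR_mulrn ?powR_ge0 // -powRrM.
have -> : (3 / 4 : R) * 4%:R = 3%:R by field.
rewrite powR_mulrn ?ler0n // => h.
by have := lt_le_trans y4 h; rewrite ltxx.
Qed.
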